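(* Let $\varphi:\mathbb{R}^n\to\mathbb{R}$ be twice continuously differentiable and convex. Then $\det(\nabla^2\varphi(x))=0$ for all $x\in\mathbb{R}^n$ if and only if there exist $v\in\mathbb{R}^n\setminus\{0\}$ and $c\in\mathbb{R}$ such that $\langle v,\nabla\varphi(x)\rangle=c$ for all $x\in\mathbb{R}^n$. *)

(* Defs.v *)
(* R^n is modelled as row vectors 'rV[R]_n. *)
From HB Require Import structures.
From mathcomp Require Import all_boot all_order all_algebra.
From mathcomp Require Import all_classical all_reals all_analysis.
Set Implicit Arguments. Unset Strict Implicit. Unset Printing Implicit Defensive.
Import Order.TTheory GRing.Theory Num.Theory.
Import numFieldNormedType.Exports.
Local Open Scope ring_scope.

Definition e_ {R : realType} {n : nat} (i : 'I_n) : 'rV[R]_n := delta_mx 0 i.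

Definition partial {R : realType} {n : nat} (f : 'rV[R]_n -> R) (i : 'I_n)
  : 'rV[R]_n -> R := fun x => derive f x (e_ i).

Definition grad {R : realType} {n : nat} (f : 'rV[R]_n -> R) (x : 'rV[R]_n)
  : 'rV[R]_n := \row_i partial f i x.

Definition hessian {R : realType} {n : nat} (f : 'rV[R]_n -> R) (x : 'rV[R]_n)
  : 'M[R]_n := \matrix_(i, j) partial (partial f i) j x.

Definition C2 {R : realType} {n : nat} (f : 'rV[R]_n -> R) : Prop :=
  (forall x, differentiable f x) /\
  (forall i x, differentiable (partial f i) x) /\
  (forall i j, continuous (partial (partial f i) j)).

Definition convex_fun {R : realType} {n : nat} (f : 'rV[R]_n -> R) : Prop :=
  forall (x y : 'rV[R]_n) (t : R), 0 <= t -> t <= 1 ->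
    f ((1 - t) *: x + t *: y) <= (1 - t) * f x + t * f y.

Definition inner {R : realType} {n : nat} (u v : 'rV[R]_n) : R :=
  \sum_(i < n) u 0 i * v 0 i.

(* Main.v *)
Require Import Defs.
From HB Require Import structures.
From mathcomp Require Import all_boot all_order all_algebra.
From mathcomp Require Import all_classical all_reals all_analysis.
From mathcomp Require Import ring lra zify.
Set Implicit Arguments. Unset Strict Implicit. Unset Printing Implicit Defensive.
Import Order.TTheory GRing.Theory Num.Theory.
Import numFieldNormedType.Exports.
Local Open Scope ring_scope.
Local Open Scope classical_set_scope.

Lemma second_order {R : realType} (k D D2 : R -> R) (c tau : R) : 0 < c -> 0 < tau ->
  (forall t : R, is_derive t (1:R) k (D t)) -> (forall t : R, is_derive t (1:R) D (D2 t)) ->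
  {for 0, continuous D2} ->
  (forall t, 0 < t -> t < tau -> 2 * c * t ^+ 2 <= k t + k (- t) - 2 * k 0) ->
  c <= D2 0.
Proof.
move=> c0 tau0 dk dD cD2 hk; rewrite leNgt; apply/negP => hlt.
have H : \forall s \near 0, D2 s < c by apply: (cvgr_lt (D2 0) cD2).
move/nbhs_ballP: H => [e /= e0 He].
have He' : forall s, `|s| < e -> D2 s < c.
  move=> s hs; apply: He; rewrite -ball_normE /= sub0r normrN //.
set t := Num.min (e / 2) (tau / 2).
have t0 : 0 < t by rewrite lt_min !divr_gt0.
have te : t < e by rewrite /t gt_min; apply/orP; left; lra.
have ttau : t < tau by rewrite /t gt_min; apply/orP; right; lra.
clearbody t.
have kc : forall a b : R, {within `[a, b], continuous k}.
  move=> a b; apply: derivable_within_continuous => x _; exact: ex_derive.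
have Dc : forall a b : R, {within `[a, b], continuous D}.
  move=> a b; apply: derivable_within_continuous => x _; exact: ex_derive.
have [xi] := MVT t0 (fun x _ => dk x) (kc 0 t); rewrite in_itv /= => /andP[xi0 xit] Exi.
have mt0 : - t < 0 by rewrite oppr_lt0.
have [ze] := MVT mt0 (fun x _ => dk x) (kc (- t) 0); rewrite in_itv /= => /andP[zet ze0] Eze.
have zexi : ze < xi by apply: lt_trans ze0 xi0.
have [th] := MVT zexi (fun x _ => dD x) (Dc ze xi); rewrite in_itv /= => /andP[th1 th2] Eth.
have hth : D2 th < c.
  apply: He'; rewrite ltr_norml; apply/andP; split; lra.
have := hk t t0 ttau.
have -> : k t + k (- t) - 2 * k 0 = t * (D xi - D ze).
  have E : k t + k (- t) - 2 * k 0 = (k t - k 0) - (k 0 - k (- t)) by ring.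
  by rewrite E Exi Eze; ring.
rewrite Eth.
have : D2 th * (xi - ze) < c * (2 * t).
  case: (lerP (D2 th) 0) => hD.
    have : D2 th * (xi - ze) <= 0 by rewrite mulr_le0_ge0 //; lra.
    nra.
  have : D2 th * (xi - ze) < c * (xi - ze) by rewrite ltr_pM2r //; lra.
  nra.
nra.
Qed.

Lemma good_idx {R : realType} (N : nat) (c : 'I_N.+1 -> R) :
  \sum_(i < N.+1) c i = 0 ->
  exists i, (\sum_(i < N.+1) `|c i|) / (4 * N.+1%:R) <= c i.
Proof.
move=> c0; apply: contrapT; set S := \sum_(i < N.+1) `|c i|; move=> H.
have lt : forall i, c i < S / (4 * N.+1%:R).
  by move=> i; rewrite ltNge; apply/negP => hi; apply: H; exists i.
have S0 : 0 <= S by apply: sumr_ge0 => *; exact: normr_ge0.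
have N0 : 0 < 4 * N.+1%:R :> R by rewrite mulr_gt0 // ltr0n.
have T0 : 0 <= S / (4 * N.+1%:R) by rewrite divr_ge0 // ltW.
have TE : S / (4 * N.+1%:R) * N.+1%:R = S / 4 by field; rewrite ?pnatr_eq0 //; lra.
set T := S / (4 * N.+1%:R) in lt T0 TE *.
have T0' : S <= 0 -> T <= 0.
  by move=> h; rewrite /T pmulr_lle0 // invr_gt0.
clearbody T.
have SE : S = 2 * \sum_(i < N.+1) ((c i + `|c i|) / 2).
  have -> : S = S + \sum_(i < N.+1) c i by rewrite c0 addr0.
  rewrite /S -big_split mulr_sumr; apply: eq_bigr => i0 _ /=.
  by rewrite mulrCA mulfV ?mulr1 1?addrC // pnatr_eq0.
have : \sum_(i < N.+1) ((c i + `|c i|) / 2) <= \sum_(i < N.+1) T.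
  apply: ler_sum => i0 _; have := lt i0; case: (lerP 0 (c i0)) => h.
    by rewrite ger0_norm //; lra.
  by rewrite ltr0_norm //; lra.
rewrite sumr_const card_ord -[T *+ _]mulr_natr TE.
move=> hle.
have Sle : S <= 0 by lra.
have := lt ord0; have := ler_norm (- c ord0); rewrite normrN.
have : `|c ord0| <= S by rewrite /S (bigD1 ord0) //= lerDl sumr_ge0 // => *; exact: normr_ge0.
lra.
Qed.

Section Helpers.
Context {R : realType} {n : nat}.
Local Notation V := 'rV[R]_n.

Lemma path_derive (f : V -> R) (x w : V) (t : R) :
  derive (fun s : R => f (x + s *: w)) t 1 = derive f (x + t *: w) w /\
  (derivable f (x + t *: w) w -> derivable (fun s : R => f (x + s *: w)) t 1).
Proof.
have E : (fun h : R => h^-1 *: (((fun s : R => f (x + s *: w)) \o shift t) (h *: 1)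
     - f (x + t *: w))) =
  (fun h : R => h^-1 *: ((f \o shift (x + t *: w)) (h *: w) - f (x + t *: w))).
  apply/funext => h /=; congr (_ *: (f _ - _)).
  by rewrite scalerDl [h *: 1]mulr1 addrCA addrA.
by rewrite /derive /derivable E.
Qed.

Lemma path_is_derive (f : V -> R) (x w : V) (t : R) :
  differentiable f (x + t *: w) ->
  is_derive t 1 (fun s : R => f (x + s *: w)) (derive f (x + t *: w) w).
Proof.
move=> df; have [E1 E2] := path_derive f x w t.
apply: DeriveDef; first exact/E2/diff_derivable.
exact: E1.
Qed.

Lemma derive_coord (f : V -> R) (x w : V) :
  differentiable f x -> derive f x w = \sum_(j < n) w 0 j * partial f j x.
Proof.
move=> df; rewrite deriveE //.
rewrite {1}(row_sum_delta w) linear_sum; apply: eq_bigr => j _.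
by rewrite linearZ /= /partial /e_ deriveE.
Qed.


Lemma grad_const_hess (phi : V -> R) (v : V) (c : R) :
  C2 phi -> (forall x, inner v (grad phi x) = c) ->
  forall x, v *m hessian phi x = 0.
Proof.
move=> [d1 [d2 _]] hc x; apply/rowP => j; rewrite !mxE.
pose F := \sum_(i < n) (v 0 i) *: partial phi i.
have FE : F = cst c.
  apply/funext => y; rewrite /F fct_sumE /= -(hc y) /inner; apply: eq_bigr => i _.
  by rewrite !mxE.
transitivity (derive F x (e_ j)); last by rewrite FE derive_cst.
rewrite derive_sum; last by move=> i; apply: derivableZ; apply: diff_derivable.
apply: eq_bigr => i _; rewrite !mxE deriveZ //; exact: diff_derivable.
Qed.


Lemma conv_support (phi : V -> R) (a y : V) :
  differentiable phi a -> convex_fun phi ->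
  phi a + derive phi a (y - a) <= phi y.
Proof.
move=> da cvx; set v := y - a.
set f := fun h : R => h^-1 *: ((phi \o shift a) (h *: v) - phi a).
have cf : f @ 0^' --> derive phi a v.
  have := diff_derivable (v := v) da; rewrite /derivable /derive -/f; exact.
have cf' : f @ 0^'+ --> derive phi a v.
  move=> A /cf /nbhs_ballP [_ /posnumP[e] xe_A].
  by exists e%:num => //= z xe_z /gt_eqF/negbT/xe_A; exact.
rewrite addrC -lerBrDr; apply: (cvgr_to_le cf'); near=> h.
have h0 : 0 < h by near: h; exact: nbhs_right_gt.
have h1 : h < 1 by near: h; exact: nbhs_right_lt.
rewrite /f /=.
change (h^-1 * (phi (h *: v + a) - phi a) <= phi y - phi a).
rewrite ler_pdivrMl //.
have -> : h *: v + a = (1 - h) *: a + h *: y.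
  by rewrite /v scalerBr scalerBl scale1r addrC -addrA [- _ + _]addrC.
have := cvx a y h (ltW h0) (ltW h1); lra.
Unshelve. all: by end_near.
Qed.



Lemma innerE' (a y : V) : inner a y = (a *m y^T) 0 0.
Proof. by rewrite /inner !mxE; apply: eq_bigr => i _; rewrite !mxE. Qed.

Lemma innerDl (a b y : V) : inner (a + b) y = inner a y + inner b y.
Proof. by rewrite /inner -big_split; apply: eq_bigr => i _; rewrite !mxE mulrDl. Qed.

Lemma innerBl (a b y : V) : inner (a - b) y = inner a y - inner b y.
Proof. by rewrite /inner -sumrB; apply: eq_bigr => i _; rewrite !mxE mulrBl. Qed.

Lemma innerZl (r : R) (a y : V) : inner (r *: a) y = r * inner a y.
Proof. by rewrite /inner mulr_sumr; apply: eq_bigr => i _; rewrite !mxE mulrA. Qed.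

Lemma inner_suml (m : nat) (f : 'I_m -> V) (y : V) :
  inner (\sum_(i < m) f i) y = \sum_(i < m) inner (f i) y.
Proof. by rewrite innerE' mulmx_suml summxE; apply: eq_bigr => i _; rewrite innerE'. Qed.

Lemma innerBr (a y z : V) : inner a (y - z) = inner a y - inner a z.
Proof. by rewrite /inner -sumrB; apply: eq_bigr => i _; rewrite !mxE mulrBr. Qed.

Lemma inner_e (j : 'I_n) (y : V) : inner (e_ j) y = y 0 j.
Proof.
rewrite /inner (bigD1 j) //= big1 ?addr0; first by rewrite /e_ mxE !eqxx /= mul1r.
by move=> i ij; rewrite /e_ mxE (negbTE ij) andbF mul0r.
Qed.

Lemma innerE (v y : V) : inner v y = (y *m v^T) 0 0.
Proof. by rewrite /inner !mxE; apply: eq_bigr => i _; rewrite !mxE mulrC. Qed.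

Lemma span_or_orth (g : V -> V) :
  (exists v : V, v != 0 /\ forall x, inner v (g x) = 0) \/
  (exists (k : nat) (pts : 'I_k -> V) (lam : 'I_n -> 'I_k -> R),
      forall j, e_ j = \sum_(i < k) lam j i *: g (pts i)).
Proof.
pose W (s : seq V) := (\sum_(i < size s) <<g s`_i>>)%MS.
have [s Hs] : exists s, forall x, (g x <= W s)%MS.
  apply: contrapT => Hno.
  have step : forall m, exists s, (m <= \rank (W s))%N.
    elim=> [|m [s hs]]; first by exists [::].
    have : ~ forall x, (g x <= W s)%MS by move=> H; apply: Hno; exists s.
    move=> /existsNP [x hx]; exists (x :: s).
    have WE : W (x :: s) = (<<g x>> + W s)%MS.
      by rewrite /W /= big_ord_recl /=; congr (_ + _)%MS.
    have lt : (W s < W (x :: s))%MS.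
      rewrite WE ltmxE addsmxSr addsmx_sub genmxE submx_refl andbT /=.
      by apply/negP.
    by move: lt; rewrite ltmxErank => /andP[_ /(leq_trans _)]; apply.
  have [s' hs'] := step n.+1; have := rank_leq_col (W s'); lia.
set K := kermx (W s)^T.
have [K0|Kn0] := eqVneq K 0.
  right.
  have rk : \rank (W s) = n.
    have := mxrank_ker (W s)^T; rewrite -/K K0 mxrank0 mxrank_tr.
    have := rank_leq_col (W s); lia.
  have full : row_full (W s) by rewrite /row_full rk.
  have : forall j : 'I_n, exists u_ : 'I_(size s) -> 'M[R]_1,
      e_ j = \sum_(i < size s) u_ i *m g s`_i.
    move=> j; have := submx_full (e_ j) full.
    by move=> /sub_sums_genmxP [u_ ->]; exists u_.
  move=> /choice [U HU]; exists (size s), (fun i => s`_i), (fun j i => U j i 0 0).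
  move=> j; rewrite HU; apply: eq_bigr => i _.
  by rewrite {1}(mx11_scalar (U j i)) mul_scalar_mx.
left.
have [i Ki] : exists i, row i K != 0.
  apply: contrapT => H; move/eqP: Kn0; apply; apply/row_matrixP => i.
  rewrite row0; apply/eqP; apply: contrapT => Hi; apply: H; exists i; exact/negP.
exists (row i K); split => // x.
have [u ->] := submxP (Hs x).
rewrite innerE -mulmxA.
have -> : W s *m (row i K)^T = 0.
  by rewrite -[W s]trmxK -trmx_mul -row_mul mulmx_ker row0 trmx0.
by rewrite mulmx0 mxE.
Qed.


Lemma cont_sum (m : nat) (f : 'I_m -> V -> R) :
  (forall i, continuous (f i)) -> continuous (fun y => \sum_(i < m) f i y).
Proof.
move=> cf; have -> : (fun y => \sum_(i < m) f i y) = \sum_(i < m) f i.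
  by apply/funext => y; rewrite fct_sumE.
elim/big_ind: _ => //; first by move=> x; exact: cst_continuous.
by move=> f1 f2 c1 c2 x; apply: continuousD; [exact: c1|exact: c2].
Qed.

Lemma G_cont (phi : V -> R) (q : V) (eps : R) :
  (forall x, differentiable phi x) ->
  continuous (fun y : V => phi y - inner q y - eps * \sum_(j < n) (y 0 j) ^+ 2).
Proof.
move=> d1.
pose A := fun y : V => inner q y.
pose B := fun y : V => eps * \sum_(j < n) (y 0 j) ^+ 2.
have -> : (fun y : V => phi y - inner q y - eps * \sum_(j < n) (y 0 j) ^+ 2)
  = (phi - A - B) by [].
move=> x; apply: continuousB; first apply: continuousB.
- exact: differentiable_continuous.
- apply: cont_sum => j z.
  have -> : (fun y : V => q 0 j * y 0 j) = (cst (q 0 j) \* (fun y : V => y 0 j)) by [].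
  apply: continuousM; first exact: cst_continuous.
  exact: coord_continuous.
- have -> : B = (cst eps \* (fun y : V => \sum_(j < n) (y 0 j) ^+ 2)) by [].
  apply: continuousM; first exact: cst_continuous.
  apply: cont_sum => j z.
  have -> : (fun y : V => (y 0 j) ^+ 2) = ((fun y : V => y 0 j) \* (fun y : V => y 0 j)).
    by apply/funext => y /=; rewrite expr2.
  by apply: continuousM; exact: coord_continuous.
Qed.


Lemma pos_min (m : nat) (f : 'I_m -> R) :
  (forall j, 0 < f j) -> exists2 t, 0 < t & forall j, t <= f j.
Proof.
move=> fp.
suff [t t0 Ht] : exists2 t, 0 < t & forall j, j \in enum 'I_m -> t <= f j.
  by exists t => // j; apply: Ht; rewrite mem_enum.
elim: (enum 'I_m) => [|a l [t t0 Ht]]; first by exists 1.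
exists (Num.min (f a) t); first by rewrite lt_min fp t0.
move=> j; rewrite in_cons => /orP[/eqP ->|jl]; rewrite ge_min ?lexx //.
by rewrite Ht ?orbT.
Qed.


Lemma norm_le_sum (u : V) j : `|u 0 j| <= \sum_(k < n) `|u 0 k|.
Proof.
rewrite (bigD1 j) //= lerDl; apply: sumr_ge0 => *; exact: normr_ge0.
Qed.

Lemma sumsq_pos (u : V) : u != 0 -> 0 < \sum_(j < n) (u 0 j) ^+ 2.
Proof.
move=> u0.
have [j hj] : exists j, u 0 j != 0.
  apply: contrapT => H; move/eqP: u0; apply; apply/rowP => j; rewrite mxE.
  apply/eqP; apply: contrapT => Hj; apply: H; exists j; exact/negP.
rewrite (bigD1 j) //=; apply: ltr_wpDr; first by apply: sumr_ge0 => *; exact: sqr_ge0.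
by rewrite exprn_even_gt0 // hj orbT.
Qed.


Lemma nondeg_of_coercive (phi : V -> R) (q : V) (be Kc : R) :
  C2 phi -> 0 < be ->
  (forall (y : V) j, `|y 0 j| <= be * (phi y - inner q y + Kc)) ->
  exists x, \det (hessian phi x) != 0.
Proof.
move=> [d1 [d2 d3]] be0 coer.
set rho := be * (`|Kc| + `|phi 0| + 2).
have rho0 : 0 < rho.
  by rewrite /rho mulr_gt0 //; have := normr_ge0 Kc; have := normr_ge0 (phi 0); lra.
have bnd : forall (y : V) j, `|y 0 j| = rho -> `|phi 0| + 2 <= phi y - inner q y.
  move=> y j hj; have := coer y j; rewrite hj /rho ler_pM2l //.
  have := ler_norm Kc; lra.
set eps := (n%:R * rho ^+ 2 + 1)^-1.
have nr0 : 0 <= n%:R * rho ^+ 2 :> R by rewrite mulr_ge0 ?sqr_ge0.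
have eps0 : 0 < eps by rewrite invr_gt0; lra.
set G := fun y : V => phi y - inner q y - eps * \sum_(j < n) (y 0 j) ^+ 2.
set B := [set y : V | forall j, `[- rho, rho]%classic (y ord0 j)].
have inB : forall y, B y <-> forall j, `|y 0 j| <= rho.
  move=> y; rewrite /B /=; split=> H j; move: (H j); by rewrite in_itv /= ler_norml.
have sq_le : forall y, B y -> eps * \sum_(j < n) (y 0 j) ^+ 2 < 1.
  move=> y /inB H.
  have : \sum_(j < n) (y 0 j) ^+ 2 <= n%:R * rho ^+ 2.
    apply: le_trans (_ : \sum_(j < n) rho ^+ 2 <= _).
      apply: ler_sum => j _; have := H j; rewrite ler_norml => /andP[a b]; nra.
    by rewrite sumr_const card_ord mulr_natl.
  move=> hS; apply: le_lt_trans (_ : eps * (n%:R * rho ^+ 2) < 1).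
    by rewrite ler_pM2l.
  by rewrite /eps mulrC ltr_pdivrMr; lra.
have B0 : B 0 by apply/inB => j; rewrite mxE normr0 ltW.
have [xs xsB xsmin] : exists2 c, c \in B & forall t, t \in B -> G c <= G t.
  apply: (@EVT_min_rV R n G B); first by exists 0.
    exact: (@rV_compact R n (fun _ => `[- rho, rho]%classic) (fun _ => @segment_compact R (- rho) rho)).
  by apply: continuous_subspaceT; exact: G_cont.
move: xsB; rewrite inE => xsB.
have G0 : G 0 = phi 0.
  rewrite /G /inner big1 ?subr0; last by move=> j _; rewrite mxE mulr0.
  by rewrite big1 ?mulr0 ?subr0 // => j _; rewrite mxE expr0n.
have Gxs : G xs <= phi 0 by rewrite -G0; apply: xsmin; rewrite inE.
have int : forall j, `|xs 0 j| < rho.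
  move=> j; rewrite lt_neqAle; move/inB: (xsB) => -> //; rewrite andbT.
  apply/negP => /eqP hj; have := bnd xs j hj; have := sq_le xs xsB.
  move: Gxs; rewrite /G; have := ler_norm (phi 0); lra.
have [tau tau0 Htau] : exists2 tau, 0 < tau & forall j, tau <= rho - `|xs 0 j|.
  by apply: pos_min => j; rewrite subr_gt0.
exists xs; apply/negP => /det0P [w w0 wH].
set Sw := \sum_(k < n) `|w 0 k| + 1.
have Sw0 : 0 < Sw.
  have : 0 <= \sum_(k < n) `|w 0 k| by apply: sumr_ge0 => *; exact: normr_ge0.
  by rewrite /Sw; lra.
set tau' := tau / Sw.
have tau'0 : 0 < tau' by rewrite divr_gt0.
have inBt : forall t, `|t| < tau' -> xs + t *: w \in B.
  move=> t ht; rewrite inE; apply/inB => j; rewrite !mxE.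
  apply: le_trans (ler_normD _ _) _; rewrite normrM.
  have h1 := Htau j; have h2 := norm_le_sum w j.
  have h3 : `|t| * `|w 0 j| <= `|t| * Sw.
    by rewrite ler_wpM2l // /Sw; lra.
  have h4 : `|t| * Sw < tau by rewrite -ltr_pdivlMr.
  simpl in h1; lra.
pose F := \sum_(i < n) (w 0 i) *: partial phi i.
have FE : forall y, F y = \sum_(i < n) w 0 i * partial phi i y.
  by move=> y; rewrite /F fct_sumE.
have dF : forall y, differentiable F y.
  move=> y; apply: differentiable_sum => i; apply: differentiableZ; exact: d2.
pose P := fun y : V => \sum_(j < n) w 0 j * \sum_(i < n) w 0 i * partial (partial phi i) j y.
have PE : forall y, derive F y w = P y.
  move=> y; rewrite derive_coord //; apply: eq_bigr => j _; congr (_ * _).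
  rewrite /partial /F derive_sum; last first.
    by move=> i; apply: derivableZ; apply: diff_derivable; exact: d2.
  by apply: eq_bigr => i _; rewrite deriveZ //; apply: diff_derivable; exact: d2.
pose k := fun t : R => phi (xs + t *: w).
pose D := fun t : R => F (xs + t *: w).
pose D2 := fun t : R => P (xs + t *: w).
have dk : forall t : R, is_derive t (1:R) k (D t).
  move=> t; have := @path_is_derive phi xs w t (d1 _).
  by rewrite derive_coord // /D FE.
have dD : forall t : R, is_derive t (1:R) D (D2 t).
  by move=> t; have := @path_is_derive F xs w t (dF _); rewrite PE.
have cD2 : {for 0, continuous D2}.
  apply: (continuous_comp (f := fun t : R => xs + t *: w) (g := P)).
    have -> : (fun t : R => xs + t *: w) = (cst xs + (fun t : R => t *: w)) by [].
    apply: continuousD; first exact: cst_continuous.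
    exact: scalel_continuous.
  apply: cont_sum => j z.
  have -> : (fun y : V => w 0 j * \sum_(i < n) w 0 i * partial (partial phi i) j y)
    = (cst (w 0 j) \* (fun y : V => \sum_(i < n) w 0 i * partial (partial phi i) j y)) by [].
  apply: continuousM; first exact: cst_continuous.
  apply: cont_sum => i z'.
  have -> : (fun y : V => w 0 i * partial (partial phi i) j y)
    = (cst (w 0 i) \* partial (partial phi i) j) by [].
  apply: continuousM; first exact: cst_continuous.
  exact: d3.
have D20 : D2 0 = 0.
  rewrite /D2 scale0r addr0 /P big1 // => j _.
  have : (w *m hessian phi xs) 0 j = 0 by rewrite wH mxE.
  rewrite mxE => E; transitivity (w 0 j * 0); last by rewrite mulr0.
  congr (_ * _); rewrite -[in RHS]E.
  by apply: eq_bigr => i _; rewrite mxE.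
set c := eps * \sum_(j < n) (w 0 j) ^+ 2.
have c0 : 0 < c by rewrite mulr_gt0 // sumsq_pos.
have hk : forall t, 0 < t -> t < tau' -> 2 * c * t ^+ 2 <= k t + k (- t) - 2 * k 0.
  move=> t t0 tt.
  have g1 := xsmin _ (inBt t ltac:(by rewrite gtr0_norm)).
  have g2 := xsmin _ (inBt (- t) ltac:(by rewrite normrN gtr0_norm)).
  have I1 : inner q (xs + t *: w) + inner q (xs + (- t) *: w) = 2 * inner q xs.
    rewrite /inner -big_split mulr_sumr /=; apply: eq_bigr => j _; rewrite !mxE; ring.
  have I2 : \sum_(j < n) ((xs + t *: w) 0 j) ^+ 2 + \sum_(j < n) ((xs + (- t) *: w) 0 j) ^+ 2
      = 2 * \sum_(j < n) (xs 0 j) ^+ 2 + 2 * t ^+ 2 * \sum_(j < n) (w 0 j) ^+ 2.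
    rewrite -big_split !mulr_sumr -big_split /=; apply: eq_bigr => j _; rewrite !mxE; ring.
  have I3 : eps * \sum_(j < n) ((xs + t *: w) 0 j) ^+ 2 + eps * \sum_(j < n) ((xs + (- t) *: w) 0 j) ^+ 2
      = 2 * (eps * \sum_(j < n) (xs 0 j) ^+ 2) + 2 * c * t ^+ 2.
    by rewrite -mulrDr I2 /c; ring.
  have k0 : k 0 = phi xs by rewrite /k scale0r addr0.
  move: g1 g2; rewrite /G k0 /k; lra.
have := second_order c0 tau'0 dk dD cD2 hk; rewrite D20; lra.
Qed.


Lemma norm_le_sumf (m : nat) (f : 'I_m -> R) i : `|f i| <= \sum_(k < m) `|f k|.
Proof. rewrite (bigD1 i) //= lerDl; apply: sumr_ge0 => *; exact: normr_ge0. Qed.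

Lemma coercive (phi : V -> R) (k : nat) (pts : 'I_k -> V) (lam : 'I_n -> 'I_k -> R) :
  (forall x, differentiable phi x) -> convex_fun phi ->
  (forall j, e_ j = \sum_(i < k) lam j i *: (grad phi (pts i) - grad phi 0)) ->
  exists q be Kc, 0 < be /\
    forall (y : V) j, `|y 0 j| <= be * (phi y - inner q y + Kc).
Proof.
move=> d1 cvx hspan.
pose b := fun i : 'I_k.+1 => if unlift ord0 i is Some i' then pts i' else 0.
have b0 : b ord0 = 0 by rewrite /b unlift_none.
have bl : forall i, b (lift ord0 i) = pts i by move=> i; rewrite /b liftK.
pose Gr := fun i => grad phi (b i).
pose q := (k.+1%:R)^-1 *: \sum_(i < k.+1) Gr i.
pose c := fun i y => inner (Gr i - q) y.
have csum : forall y, \sum_(i < k.+1) c i y = 0.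
  move=> y; rewrite /c.
  under eq_bigr do rewrite innerBl.
  rewrite sumrB sumr_const card_ord /q innerZl inner_suml -[_ *+ k.+1]mulr_natr.
  by rewrite mulrC mulrA mulfV ?mul1r ?subrr // pnatr_eq0.
have support : forall y i, phi (b i) - inner (Gr i) (b i) + inner (Gr i) y <= phi y.
  move=> y i; have := conv_support y (d1 (b i)) cvx.
  rewrite derive_coord //.
  have -> : \sum_(j < n) (y - b i) 0 j * partial phi j (b i)
      = inner (Gr i) y - inner (Gr i) (b i).
    rewrite -innerBr /inner; apply: eq_bigr => j _; rewrite /Gr /grad mxE mulrC.
    by [].
  lra.
pose A := fun i => phi (b i) - inner (Gr i) (b i).
pose Kc := \sum_(i < k.+1) `|A i|.
pose S := fun y => \sum_(i < k.+1) `|c i y|.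
have lowb : forall y, S y / (4 * k.+1%:R) <= phi y - inner q y + Kc.
  move=> y; have [i hi] := good_idx (csum y).
  have := support y i.
  have : - Kc <= A i.
    have := norm_le_sumf A i; have := ler_norm (- A i); rewrite normrN /Kc; lra.
  have : c i y = inner (Gr i) y - inner q y by rewrite /c innerBl.
  rewrite /S; move: hi; rewrite /A; generalize ((\sum_(i0 < k.+1) `|c i0 y|) / (4 * k.+1%:R)) => T; lra.
have coord : forall (y : V) j, y 0 j = \sum_(i < k) lam j i * (c (lift ord0 i) y - c ord0 y).
  move=> y j; rewrite -inner_e hspan inner_suml; apply: eq_bigr => i _.
  rewrite innerZl; congr (_ * _).
  have G0 : grad phi 0 = Gr ord0 by rewrite /Gr b0.
  have Gl : grad phi (pts i) = Gr (lift ord0 i) by rewrite /Gr bl.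
  rewrite G0 Gl /c !innerBl; ring.
pose L := \sum_(j < n) \sum_(i < k) `|lam j i| + 1.
have L0 : 0 < L.
  have : 0 <= \sum_(j < n) \sum_(i < k) `|lam j i|.
    by apply: sumr_ge0 => j _; apply: sumr_ge0 => *; exact: normr_ge0.
  rewrite /L; lra.
have Lj : forall j, \sum_(i < k) `|lam j i| <= L.
  move=> j; rewrite /L; apply: le_trans (_ : \sum_(j < n) \sum_(i < k) `|lam j i| <= _).
    rewrite (bigD1 j) //= lerDl; apply: sumr_ge0 => j' _; apply: sumr_ge0 => *.
    exact: normr_ge0.
  lra.
have S0 : forall y, 0 <= S y by move=> y; apply: sumr_ge0 => *; exact: normr_ge0.
have bound : forall (y : V) j, `|y 0 j| <= 2 * L * S y.
  move=> y j; rewrite coord; apply: le_trans (ler_norm_sum _ _ _) _.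
  apply: le_trans (_ : \sum_(i < k) `|lam j i| * (2 * S y) <= _).
    apply: ler_sum => i _; rewrite normrM ler_wpM2l //.
    apply: le_trans (ler_normB _ _) _.
    have := norm_le_sumf (c^~ y) (lift ord0 i); have := norm_le_sumf (c^~ y) ord0.
    rewrite /S; lra.
  rewrite -mulr_suml; have := Lj j; have := S0 y; nra.
exists q, (8 * L * k.+1%:R), Kc; split.
  by rewrite !mulr_gt0 // ltr0n.
move=> y j; apply: le_trans (bound y j) _.
have := lowb y; rewrite ler_pdivrMr; last by rewrite mulr_gt0 // ltr0n.
move=> h; have : 2 * L * S y <= 2 * L * ((phi y - inner q y + Kc) * (4 * k.+1%:R)).
  by rewrite ler_wpM2l // mulr_ge0 // ltW.
move=> h2; apply: le_trans h2 _; rewrite le_eqVlt; apply/orP; left; apply/eqP; ring.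
Qed.

End Helpers.

Unset Implicit Arguments.
Local Close Scope classical_set_scope.

Theorem proposition4p9 (R : realType) (n : nat) (phi : 'rV[R]_n -> R) :
  C2 phi -> convex_fun phi ->
  ((forall x : 'rV[R]_n, \det (hessian phi x) = 0) <->
   (exists (v : 'rV[R]_n) (c : R), v != 0 /\
      forall x : 'rV[R]_n, inner v (grad phi x) = c)).
Proof.
move=> hC2 cvx; split.
- move=> hdet.
  have [[v [v0 hv]]|[k [pts [lam hspan]]]] :=
    span_or_orth (fun x : 'rV[R]_n => grad phi x - grad phi 0).
    exists v, (inner v (grad phi 0)); split => // x.
    by have := hv x; rewrite innerBr => /eqP; rewrite subr_eq0 => /eqP.
  have [q [be [Kc [be0 hco]]]] := coercive hC2.1 cvx hspan.
  have [x] := nondeg_of_coercive hC2 be0 hco.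
  by rewrite hdet eqxx.
- move=> [v [c [v0 hc]]] x; apply/eqP/det0P; exists v => //.
  exact: grad_const_hess hC2 hc x.
Qed.
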